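(* (1) For every character $\varphi$ of $\mathcal H$, $\varphi\star\delta_\bullet$ is an infinitesimal character of $\mathcal H_{CK}$ (i.e. $\beta(xy)=\beta(x)\varepsilon(y)+\varepsilon(x)\beta(y)$) which coincides with $\varphi$ on nonempty trees (its value on the tree $\bullet$ being $\varphi(\bullet)=1$); the map $\varphi\mapsto\varphi\star\delta_\bullet$ is a bijection between characters of $\mathcal H$ and infinitesimal characters $\beta$ of $\mathcal H_{CK}$ with $\beta(\bullet)=1$. (2) For every character $\varphi$ of $\mathcal H$, $\varphi\star\delta$ is a character of $\mathcal H_{CK}$ which coincides with $\varphi$ on nonempty trees; the map $\varphi\mapsto\varphi\star\delta$ is a bijection between characters of $\mathcal H$ and characters $b$ of $\mathcal H_{CK}$ with $b(\bullet)=1$.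
   Context: Let $k$ be a field of characteristic $0$. Rooted trees are finite and non-planar; $\bullet$ denotes the one-vertex tree. (1) $\mathcal H$ is the free commutative $k$-algebra generated by isomorphism classes of rooted trees with at least one edge, with unit identified with $\bullet$; a character of $\mathcal H$ is a unital algebra morphism $\mathcal H\to k$. A subforest of a rooted tree $t$ is either the trivial subforest $\bullet$ or a nonempty set of pairwise vertex-disjoint subtrees each with at least one edge, identified with the product of its components; $t/s$ is the tree obtained by contracting each component of $s$ to a vertex. (2) $\mathcal H_{CK}$ is the Connes–Kreimer Hopf algebra of rooted forests (free commutative algebra on nonempty rooted trees, unit the empty forest $\mathbf 1$, counit $\varepsilon$, coproduct by admissible cuts); characters of $\mathcal H_{CK}$ are unital algebra morphisms to $k$. $\delta_\bullet\in\mathcal H_{CK}^*$ takes value $1$ on the tree $\bullet$ and $0$ on all other forests; $\delta$ is the character of $\mathcal H_{CK}$ with $\delta(\bullet)=1$ and $\delta(t)=0$ for every tree with at least two vertices. (3) $\Phi:\mathcal H_{CK}\to\mathcal H\otimes\mathcal H_{CK}$ is the algebra morphism with $\Phi(\mathbf 1)=\bullet\otimes\mathbf 1$ and $\Phi(t)=\sum_s s\otimes t/s$ over subforests $s$ of $t$ (with $s\in\mathcal H$, $t/s\in\mathcal H_{CK}$) for each nonempty tree $t$. For $\alpha\in\mathcal H^*$ and $b\in\mathcal H_{CK}^*$, $\alpha\star b=(\alpha\otimes b)\circ\Phi$. *)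

(* Defs.v *)
From HB Require Import structures.
From mathcomp Require Import all_boot all_order all_algebra.
Set Implicit Arguments. Unset Strict Implicit. Unset Printing Implicit Defensive.
Import GRing.Theory.
Local Open Scope ring_scope.

(* Rooted trees: represented by planar rose trees; isomorphism classes of  *)
(* (non-planar) rooted trees are handled by the relation [tiso] below, and *)
(* all functionals are required to be invariant under it.                  *)
Inductive tree : Type := Node of seq tree.

Definition bullet : tree := Node [::].

Definition has_edge (t : tree) : bool :=
  if t is Node (_ :: _) then true else false.

Inductive tiso : tree -> tree -> Prop :=
| tiso_node ts us : fiso ts us -> tiso (Node ts) (Node us)
with fiso : seq tree -> seq tree -> Prop :=
| fiso_nil : fiso [::] [::]
| fiso_cons t u ts us : tiso t u -> fiso ts us -> fiso (t :: ts) (u :: us)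
| fiso_swap t u ts : fiso [:: t, u & ts] [:: u, t & ts]
| fiso_trans ts us vs : fiso ts us -> fiso us vs -> fiso ts vs.

(* Subforests.  A subforest of t (a family of pairwise vertex-disjoint     *)
(* subtrees, each with >= 1 edge, or the trivial subforest) is encoded by  *)
(* the set of edges it contains; an edge is identified with its lower      *)
(* vertex, so we mark every child edge by a boolean.                       *)
Inductive mtree : Type := MNode of seq (bool * mtree).

Fixpoint markings (t : tree) : seq mtree :=
  let: Node ts := t in
  map MNode
    ((fix go (ts : seq tree) : seq (seq (bool * mtree)) :=
        match ts with
        | [::] => [:: [::]]
        | t' :: ts' =>
            [seq x :: r | x <- [seq (b, m) | b <- [:: false; true],
                                              m <- markings t'],
                          r <- go ts']
        end) ts).

Fixpoint contract (m : mtree) : tree :=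
  let: MNode cs := m in
  Node (flatten (map (fun c => let: Node ks := contract c.2 in
                               if c.1 then ks else [:: Node ks]) cs)).

Fixpoint piece (m : mtree) : tree :=
  let: MNode cs := m in
  Node (flatten (map (fun c => if c.1 then [:: piece c.2] else [::]) cs)).

(* The components of s whose top vertex lies in m; [top] says whether the
   root of m is a top vertex (its parent edge is unmarked / it is the root). *)
Fixpoint comps (m : mtree) (top : bool) : seq tree :=
  let: MNode cs := m in
  (if top && has fst cs then [:: piece m] else [::])
    ++ flatten (map (fun c => comps c.2 (~~ c.1)) cs).

Definition markingsF (F : seq tree) : seq (seq mtree) :=
  foldr (fun t acc => [seq m :: r | m <- markings t, r <- acc]) [:: [::]] F.

(* Linear functionals.  A linear form on H_CK is given by its values on the *)
(* basis of forests (a forest is a [seq tree], taken up to [fiso]); a      *)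
(* linear form on H is given by its values on the basis of monomials in    *)
(* trees with >= 1 edge, i.e. forests [F] with [all has_edge F], the empty *)
(* forest [::] being the unit (= the tree bullet) of H.                    *)
Section Functionals.
Variable k : fieldType.

(* alpha * b = (alpha (x) b) o Phi, with Phi(t1...tn) = prod_i Phi(t_i),
   Phi(t) = sum_s s (x) t/s, Phi(1) = bullet (x) 1. *)
Definition conv (alpha : seq tree -> k) (b : seq tree -> k) (F : seq tree) : k :=
  \sum_(ms <- markingsF F)
     alpha (flatten [seq comps m true | m <- ms]) * b [seq contract m | m <- ms].

Definition epsCK (F : seq tree) : k := if F is [::] then 1 else 0.

Definition delta_bullet (F : seq tree) : k :=
  match F with [:: Node [::]] => 1 | _ => 0 end.

Definition delta (F : seq tree) : k :=
  \prod_(t <- F) (if has_edge t then 0 else 1).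

Definition functionalCK (b : seq tree -> k) : Prop :=
  forall F G, fiso F G -> b F = b G.

Definition characterCK (b : seq tree -> k) : Prop :=
  [/\ functionalCK b, b [::] = 1 & forall F G, b (F ++ G) = b F * b G].

Definition infcharCK (beta : seq tree -> k) : Prop :=
  functionalCK beta /\
  forall F G, beta (F ++ G) = beta F * epsCK G + epsCK F * beta G.

Definition characterH (phi : seq tree -> k) : Prop :=
  [/\ forall F G, all has_edge F -> fiso F G -> phi F = phi G,
      phi [::] = 1 &
      forall F G, all has_edge F -> all has_edge G -> phi (F ++ G) = phi F * phi G].

Definition eqH (phi psi : seq tree -> k) : Prop :=
  forall F, all has_edge F -> phi F = psi F.

End Functionals.

(* A tree as an element of H (bullet is the unit). *)
Definition toH (t : tree) : seq tree := if has_edge t then [:: t] else [::].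

(* Main.v *)
Require Import Defs.
From mathcomp Require Import all_boot all_order all_algebra.
Set Implicit Arguments. Unset Strict Implicit. Unset Printing Implicit Defensive.
Import GRing.Theory.
Local Open Scope ring_scope.

Definition allP (P : tree -> Prop) (ts : seq tree) : Prop :=
  foldr (fun t acc => P t /\ acc) True ts.

Fixpoint tree_ind' (P : tree -> Prop) (H : forall ts, allP P ts -> P (Node ts))
  (t : tree) : P t :=
  match t with
  | Node ts => H ts ((fix go (ts : seq tree) : allP P ts :=
       match ts with [::] => I | t' :: ts' => conj (tree_ind' H t') (go ts') end) ts)
  end.

Fixpoint full (t : tree) : mtree :=
  let: Node ts := t in MNode (map (fun t' => (true, full t')) ts).

Fixpoint goM (ts : seq tree) : seq (seq (bool * mtree)) :=
  match ts with
  | [::] => [:: [::]]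
  | t' :: ts' => [seq x :: r | x <- [seq (b, m) | b <- [:: false; true],
                                     m <- markings t'], r <- goM ts']
  end.

Lemma markingsE ts : markings (Node ts) = map MNode (goM ts).
Proof. by []. Qed.

Section W.
Variable k : fieldType.

Definition w (m : mtree) : k := if has_edge (contract m) then 0 else 1.

Lemma wE cs : w (MNode cs) = \prod_(c <- cs) (if c.1 then w c.2 else 0).
Proof.
rewrite /w /=; elim: cs => [|[b m] cs IH]; first by rewrite big_nil.
rewrite big_cons /= -IH; case: (contract m) => [[|k0 ks]]; case: b => /=;
  rewrite ?mul1r ?mul0r //.
Qed.

Lemma treeL (t : tree) : forall f : mtree -> k,
  \sum_(m <- markings t) w m * f m = f (full t).
Proof.
elim/tree_ind': t => ts IHts f.
rewrite markingsE big_map /=.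
have: forall g : seq (bool * mtree) -> k,
  \sum_(cs <- goM ts) w (MNode cs) * g cs = g [seq (true, full t) | t <- ts].
  elim: ts IHts {f} => [|t ts IH] /=; first by move=> _ g; rewrite big_cons big_nil wE big_nil mul1r addr0.
  move=> [IHt IHs] g. rewrite big_allpairs_dep /=.
  under eq_bigr => x _.
    under eq_bigr => r _ do rewrite wE big_cons -mulrA -wE.
    rewrite -mulr_sumr (IH IHs (fun r => g (x :: r))).
  over.
  rewrite cats0 big_cat !big_map /= big1 ?add0r; last by move=> m _; rewrite mul0r.
  exact: (IHt (fun m => g ((true, m) :: [seq (true, full t0) | t0 <- ts]))).
by move=> /(_ (fun cs => f (MNode cs))).
Qed.

Lemma forestL (F : seq tree) : forall G : seq mtree -> k,
  \sum_(ms <- markingsF F) G ms * \prod_(m <- ms) w m = G (map full F).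
Proof.
elim: F => [|t F IH] G /=.
  by rewrite /markingsF /= big_cons big_nil big_nil mulr1 addr0.
rewrite big_allpairs_dep /=.
under eq_bigr => m _.
  under eq_bigr => r _ do rewrite big_cons mulrCA.
  rewrite -mulr_sumr (IH (fun r => G (m :: r))).
over.
exact: (treeL t (fun m => G (m :: map full F))).
Qed.

Lemma piece_full t : piece (full t) = t.
Proof.
elim/tree_ind': t => ts IH /=; congr Node.
elim: ts IH => [|t ts IHs] //= [-> /IHs ->] //.
Qed.

Lemma comps_full_false t : comps (full t) false = [::].
Proof.
elim/tree_ind': t => ts IH /=.
elim: ts IH => [|t ts IHs] //= [-> /IHs] //.
Qed.

Lemma comps_full_true t : comps (full t) true = toH t.
Proof.
case: t => ts /=.
have ->: flatten [seq comps c.2 (~~ c.1) | c <- [seq (true, full t') | t' <- ts]] = [::].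
  by elim: ts => [|t ts IHs] //=; rewrite comps_full_false IHs.
rewrite cats0 /toH /=.
case: ts => [|t ts] //=.
by rewrite -[in RHS](piece_full (Node (t :: ts))).
Qed.

Lemma conv_delta (phi : seq tree -> k) F :
  conv phi (@delta k) F = phi (flatten (map toH F)).
Proof.
rewrite /conv.
under eq_bigr => ms _ do rewrite /delta big_map -/(w _).
rewrite (forestL F (fun ms => phi (flatten [seq comps m true | m <- ms]))).
by rewrite -map_comp; congr (phi (flatten _)); apply: eq_map => t /=; rewrite comps_full_true.
Qed.

Lemma sum_size0 (F : seq tree) (g : seq mtree -> k) :
  (forall ms, size ms = size F -> g ms = 0) -> \sum_(ms <- markingsF F) g ms = 0.
Proof.
elim: F g => [|t F IH] g H /=.
  by rewrite /markingsF /= big_cons big_nil H // addr0.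
rewrite big_allpairs_dep big1 // => m _; apply: IH => r Hr; apply: H => /=; rewrite Hr.
by [].
Qed.

Lemma conv_db (phi : seq tree -> k) F :
  conv phi (@delta_bullet k) F =
  if size F == 1%N then phi (flatten (map toH F)) else 0.
Proof.
case: F => [|t [|u F]].
- by rewrite /conv /markingsF /= big_cons big_nil mulr0 addr0.
  rewrite /conv /markingsF /=.
  have -> : flatten [seq [:: [:: m]] | m <- markings t] = [seq [:: m] | m <- markings t].
    by elim: (markings t) => //= ? ? ->.
  rewrite big_map.
  under eq_bigr => m _.
    rewrite /= cats0.
    have -> : (match contract m with Node [::] => 1 | Node (_ :: _) => 0 end) = w m :> k.
      by rewrite /w; case: (contract m) => [[|]].
    rewrite mulrC.
  over.
  by rewrite (treeL t (fun m => phi (comps m true))) comps_full_true cats0.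
- rewrite /conv sum_size0 // => ms; case: ms => [|a [|b ms]] //= _.
  by case: (contract a) => [[|]] ; rewrite mulr0.
Qed.

End W.

Fixpoint tiso_refl t : tiso t t :=
  match t with
  | Node ts => tiso_node ((fix go (ts : seq tree) : fiso ts ts :=
      match ts with [::] => fiso_nil | t' :: ts' => fiso_cons (tiso_refl t') (go ts') end) ts)
  end.

Lemma fiso_refl ts : fiso ts ts.
Proof. by elim: ts => [|t ts IH]; constructor => //; apply: tiso_refl. Qed.

Lemma fiso_size F G : fiso F G -> size F = size G.
Proof. by elim => //= *; congruence. Qed.

Lemma tiso_edge t u : tiso t u -> has_edge t = has_edge u.
Proof. by case=> ts us /fiso_size; case: ts; case: us. Qed.

Lemma all_toH F : all has_edge (flatten (map toH F)).
Proof. by elim: F => //= t F IH; rewrite all_cat IH andbT /toH; case: ifP => //= ->. Qed.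

Lemma fiso_toH F G : fiso F G -> fiso (flatten (map toH F)) (flatten (map toH G)).
Proof.
elim => //=.
- by constructor.
- move=> t u ts us Ht _ IH; have Htu := tiso_edge Ht; rewrite /toH -Htu.
  by case: ifP => // _; apply: fiso_cons.
- move=> t u ts; rewrite /toH; case: (has_edge t); case: (has_edge u) => /=;
  (apply: fiso_swap || apply: fiso_refl).
- move=> ? ? ? _ H1 _ H2; exact: fiso_trans H1 H2.
Qed.


Lemma phi_toH_inv (k : fieldType) (phi : seq tree -> k) F G :
  characterH phi -> fiso F G -> phi (flatten (map toH F)) = phi (flatten (map toH G)).
Proof. by case=> Hi _ _ H; apply: Hi; [apply: all_toH | apply: fiso_toH]. Qed.

Lemma toH_single (k : fieldType) (t : tree) : flatten (map toH [:: t]) = toH t.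
Proof. by rewrite /= cats0. Qed.

Lemma char_eq (k : fieldType) (phi psi : seq tree -> k) :
  characterH phi -> characterH psi ->
  (forall t, has_edge t -> phi [:: t] = psi [:: t]) -> eqH phi psi.
Proof.
case=> _ P1 PM; case=> _ Q1 QM H F; elim: F => [|t F IH]; first by rewrite P1 Q1.
move=> /= /andP[ht hF].
have -> : t :: F = [:: t] ++ F by [].
by rewrite PM ?QM //= ?ht // H // IH.
Qed.

Lemma not_edge_bullet t : ~~ has_edge t -> t = bullet.
Proof. by case: t => [[|]]. Qed.

Theorem mainTheorem8 (k : fieldType) (char0 : [pchar k] =i pred0) :
  (* (1) *)
  ((forall phi : seq tree -> k, characterH phi ->
      infcharCK (conv phi (@delta_bullet k)) /\
      (forall t : tree, conv phi (@delta_bullet k) [:: t] = phi (toH t))) /\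
   (forall phi psi : seq tree -> k, characterH phi -> characterH psi ->
      (forall F, conv phi (@delta_bullet k) F = conv psi (@delta_bullet k) F) ->
      eqH phi psi) /\
   (forall beta : seq tree -> k, infcharCK beta -> beta [:: bullet] = 1 ->
      exists2 phi : seq tree -> k, characterH phi &
        forall F, conv phi (@delta_bullet k) F = beta F))
  /\
  (* (2) *)
  ((forall phi : seq tree -> k, characterH phi ->
      characterCK (conv phi (@delta k)) /\
      (forall t : tree, conv phi (@delta k) [:: t] = phi (toH t))) /\
   (forall phi psi : seq tree -> k, characterH phi -> characterH psi ->
      (forall F, conv phi (@delta k) F = conv psi (@delta k) F) ->
      eqH phi psi) /\
   (forall b : seq tree -> k, characterCK b -> b [:: bullet] = 1 ->
      exists2 phi : seq tree -> k, characterH phi &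
        forall F, conv phi (@delta k) F = b F)).
Proof.
split; split; [|split| |split].
- move=> phi Hphi; split; last by move=> t; rewrite conv_db /= cats0.
  split.
    move=> F G H; rewrite !conv_db (fiso_size H).
    case: ifP => // _; exact: phi_toH_inv.
  move=> F G; rewrite !conv_db size_cat.
  case: F => [|t F]; case: G => [|u G] /=; rewrite ?cats0 ?mulr0 ?mul0r ?mulr1 ?mul1r ?add0r ?addr0 //.
  rewrite addn0 //. by rewrite addSn addnS.
- move=> phi psi Hp Hq H; apply: char_eq => // t ht.
  by move: (H [:: t]); rewrite !conv_db /= cats0 /toH ht.
- move=> beta [Hf Hi] Hb.
  have B0 : beta [::] = 0.
    have := Hi [::] [::]; rewrite /= mulr1 mul1r => h.
    apply: (@addrI _ (beta [::])); by rewrite addr0 -h.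
  exists (fun F => \prod_(t <- F) beta [:: t]).
    split.
    + move=> F G _; elim => //=.
      * move=> t u ts us Ht _ IH; rewrite !big_cons IH.
        by rewrite (Hf [:: t] [:: u]) //; apply: fiso_cons => //; apply: fiso_nil.
      * by move=> t u ts; rewrite !big_cons mulrCA.
      * by move=> ? ? ? _ -> _ ->.
    + by rewrite big_nil.
    + by move=> F G _ _; rewrite big_cat.
  move=> F; rewrite conv_db.
  case: F => [|t [|u F]] //=.
  + rewrite cats0 /toH; case: ifP => ht; first by rewrite big_cons big_nil mulr1.
    by rewrite big_nil (not_edge_bullet (negbT ht)).
  + have -> : [:: t, u & F] = [:: t] ++ (u :: F) by [].
    by rewrite Hi /= mulr0 mul0r addr0.
- move=> phi Hphi; split; last by move=> t; rewrite conv_delta /= cats0.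
  case: (Hphi) => _ P1 PM.
  split.
  + by move=> F G H; rewrite !conv_delta; apply: phi_toH_inv.
  + by rewrite conv_delta.
  + by move=> F G; rewrite !conv_delta map_cat flatten_cat PM // all_toH.
- move=> phi psi Hp Hq H; apply: char_eq => // t ht.
  by move: (H [:: t]); rewrite !conv_delta /= cats0 /toH ht.
- move=> b [Hf H1 HM] Hb; exists b.
    split => [F G _ H||F G _ _]; [exact: Hf|exact: H1|exact: HM].
  move=> F; rewrite conv_delta; elim: F => //= t F IH.
  rewrite HM IH.
  have -> : t :: F = [:: t] ++ F by [].
  rewrite HM /toH; case: ifP => // ht.
  by rewrite (not_edge_bullet (negbT ht)) Hb H1.
Qed.
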